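(* An $L$-layer linear attention model with $H$ heads, dimension $d$ and precision $p$ cannot solve the function evaluation task $\mathsf{Eva}$ on $[n]$ whenever $LHd(d+1)p<n\log n$. On the other hand, a single-layer full attention Transformer solves $\mathsf{Eva}$ with $Hdp=O(\mathrm{poly}\log n)$. The same lower bound holds for linear attention with chain-of-thought.
   Context: Function evaluation $\mathsf{Eva}(f,x)$: the input is a function $f:[n]\to[n]$, given as $n$ tokens encoding $f(1),\dots,f(n)$, followed by one token encoding $x\in[n]$. The required output is $f(x)$. Linear attention layer: head $h$ outputs $y_i=\sum_{j\le i}\alpha_{i,j}Vx_j$ with $\alpha_{i,j}=\varphi(Qx_i)^\top\varphi(Kx_j)/\sum_{j'\le i}\varphi(Qx_i)^\top\varphi(Kx_{j'})$ for an arbitrary $\varphi:\mathbb{R}^d\to\mathbb{R}^d$. Here $Q,K,V\in\mathbb{R}^{d\times dH}$ have $p$-bit entries, the $H$ head outputs are concatenated, and each layer is followed by an arbitrary position-wise MLP map. Full attention is defined in the same way, with softmax weights $\alpha_{i,j}\propto\exp(\langle Qx_i,Kx_j\rangle)$. All quantities use $p$-bit precision. With chain-of-thought (CoT), the model, after reading the input, autoregressively generates additional tokens (each generated token is appended as a new input position), and the answer is read from the generated tokens. *)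

(* Defs.v *)
From HB Require Import structures.
From mathcomp Require Import all_boot all_order all_algebra.
From mathcomp Require Import reals sequences exp.
From Stdlib Require List.
Notation In := List.In.
Set Implicit Arguments.
Unset Strict Implicit.
Unset Printing Implicit Defensive.
Import Order.TTheory GRing.Theory Num.Theory.
Local Open Scope ring_scope.

Section Transformers.
Variable R : realType.

Record precision (p : nat) := Precision {
  pvals : seq R;
  pvals_uniq : uniq pvals;
  pvals_size : (size pvals <= 2 ^ p)%N;
  rnd : R -> R;
  rnd_in : forall x, rnd x \in pvals }.

(* The standard p-bit fixed-point format: integers z in
   [-(2^p %/ 2), 2^p - 2^p %/ 2) (exactly 2^p of them), scaled by 2^-(p./2);
   rounding = round to nearest, saturating at the ends of the range. *)
Definition fx_lo (p : nat) : int := - (Posz (2 ^ p %/ 2)).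
Definition fx_hi (p : nat) : int := Posz (2 ^ p - 2 ^ p %/ 2) - 1.
Definition fx_scale (p : nat) : R := 2%:R ^+ (p./2).

Definition is_fx (p : nat) (r : R) : Prop :=
  exists z : int, fx_lo p <= z <= fx_hi p /\ r = z%:~R / fx_scale p.

Definition fx_rnd (p : nat) (x : R) : R :=
  let z := Num.floor (x * fx_scale p + 2%:R^-1) in
  (Num.max (fx_lo p) (Num.min (fx_hi p) z))%:~R / fx_scale p.

Definition rndv (rd : R -> R) (m k : nat) (A : 'M[R]_(m, k)) : 'M[R]_(m, k) :=
  map_mx rd A.

(* [n] = {1,..,n} is represented by 'I_n.  The input has n+1 positions:
   positions 0..n-1 carry tokens f(1),...,f(n), position n carries x.
   emb (position) (token) is the (arbitrary, p-bit rounded) embedding. *)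
Definition eva_input (rd : R -> R) (n d : nat) (emb : nat -> 'I_n -> 'rV[R]_d)
    (f : 'I_n -> 'I_n) (x : 'I_n) : seq 'rV[R]_d :=
  [seq rndv rd (emb (val i) (f i)) | i <- enum 'I_n] ++ [:: rndv rd (emb n x)].

Record lin_head (d : nat) := LinHead {
  lQ : 'M[R]_d; lK : 'M[R]_d; lV : 'M[R]_d;
  lphi : 'rV[R]_d -> 'rV[R]_d }.

(* H heads (the d x dH matrices Q,K,V are given blockwise per head),
   followed by an arbitrary position-wise MLP which sees the position's
   input (residual stream) and the H head outputs. *)
Record lin_layer (d H : nat) := LinLayer {
  lheads : 'I_H -> lin_head d;
  lmlp : 'rV[R]_d -> ('I_H -> 'rV[R]_d) -> 'rV[R]_d }.

Definition lin_layer_wf (inP : R -> Prop) d H (l : lin_layer d H) : Prop :=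
  forall h i j, inP (lQ (lheads l h) i j) /\ inP (lK (lheads l h) i j)
                /\ inP (lV (lheads l h) i j).

(* Recurrent state of one head after positions 1..i:
   S_i = sum_{j<=i} phi(K x_j)^T (V x_j)   (d x d)
   z_i = sum_{j<=i} phi(K x_j)            (1 x d)
   accumulated in p-bit precision (rounded after every step). *)
Definition lin_state (d : nat) := ('M[R]_d * 'rV[R]_d)%type.

Definition lin_update (rd : R -> R) d (hd : lin_head d) (st : lin_state d)
    (x : 'rV[R]_d) : lin_state d :=
  let k := rndv rd (lphi hd (rndv rd (x *m lK hd))) in
  let v := rndv rd (x *m lV hd) in
  (rndv rd (st.1 + k^T *m v), rndv rd (st.2 + k)).

(* y_i = sum_{j<=i} alpha_{ij} V x_j
       = (phi(Q x_i) S_i) / (phi(Q x_i) . z_i) *)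
Definition lin_out (rd : R -> R) d (hd : lin_head d) (st : lin_state d)
    (x : 'rV[R]_d) : 'rV[R]_d :=
  let q := rndv rd (lphi hd (rndv rd (x *m lQ hd))) in
  let num := rndv rd (q *m st.1) in
  let den := rd (\sum_(k < d) q 0 k * st.2 0 k) in
  rndv rd (den^-1 *: num).

Fixpoint lin_layer_run (rd : R -> R) d H (l : lin_layer d H)
    (st : 'I_H -> lin_state d) (xs : seq 'rV[R]_d) : seq 'rV[R]_d :=
  match xs with
  | [::] => [::]
  | x :: xs' =>
      let st' := fun h => lin_update rd (lheads l h) (st h) x in
      rndv rd (lmlp l x (fun h => lin_out rd (lheads l h) (st' h) x))
        :: lin_layer_run rd l st' xs'
  end.

Definition lin_layer_apply (rd : R -> R) d H (l : lin_layer d H)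
    (xs : seq 'rV[R]_d) : seq 'rV[R]_d :=
  lin_layer_run rd l (fun _ => (0, 0)) xs.

Definition lin_run (rd : R -> R) d H (ls : seq (lin_layer d H))
    (xs : seq 'rV[R]_d) : seq 'rV[R]_d :=
  foldl (fun ys l => lin_layer_apply rd l ys) xs ls.

Definition lin_solves_Eva (p : nat) (P : precision p) (n L H d : nat) : Prop :=
  exists (ls : seq (lin_layer d H)) (emb : nat -> 'I_n -> 'rV[R]_d)
         (dec : 'rV[R]_d -> 'I_n),
    size ls = L /\
    (forall l, In l ls -> lin_layer_wf (fun r => r \in pvals P) l) /\
    forall (f : 'I_n -> 'I_n) (x : 'I_n),
      dec (last 0 (lin_run (rnd P) ls (eva_input (rnd P) emb f x))) = f x.

Fixpoint cot_generate (rd : R -> R) d H (ls : seq (lin_layer d H))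
    (V : Type) (emb_gen : nat -> V -> 'rV[R]_d) (dec : 'rV[R]_d -> V)
    (T : nat) (xs : seq 'rV[R]_d) : seq V :=
  match T with
  | 0 => [::]
  | T'.+1 =>
      let v := dec (last 0 (lin_run rd ls xs)) in
      v :: cot_generate rd ls emb_gen dec T'
             (rcons xs (rndv rd (emb_gen (size xs) v)))
  end.

Definition lin_cot_solves_Eva (p : nat) (P : precision p) (n L H d : nat)
    : Prop :=
  exists (V : finType) (T : nat) (ls : seq (lin_layer d H))
         (emb : nat -> 'I_n -> 'rV[R]_d) (emb_gen : nat -> V -> 'rV[R]_d)
         (dec : 'rV[R]_d -> V) (ans : seq V -> 'I_n),
    size ls = L /\
    (forall l, In l ls -> lin_layer_wf (fun r => r \in pvals P) l) /\
    forall (f : 'I_n -> 'I_n) (x : 'I_n),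
      ans (cot_generate (rnd P) ls emb_gen dec T
             (eva_input (rnd P) emb f x)) = f x.

Record full_head (d : nat) := FullHead { fQ : 'M[R]_d; fK : 'M[R]_d; fV : 'M[R]_d }.

Record full_layer (d H : nat) := FullLayer {
  fheads : 'I_H -> full_head d;
  fmlp : 'rV[R]_d -> ('I_H -> 'rV[R]_d) -> 'rV[R]_d }.

Definition full_layer_wf (inP : R -> Prop) d H (l : full_layer d H) : Prop :=
  forall h i j, inP (fQ (fheads l h) i j) /\ inP (fK (fheads l h) i j)
                /\ inP (fV (fheads l h) i j).

(* output of a head at position i (0-based), causal:
   y_i = sum_{j<=i} alpha_{ij} V x_j,  alpha_{ij} ∝ exp(<Q x_i, K x_j>) *)
Definition full_out (rd : R -> R) d (hd : full_head d) (xs : seq 'rV[R]_d)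
    (i : nat) : 'rV[R]_d :=
  let q := rndv rd (nth 0 xs i *m fQ hd) in
  let k j := rndv rd (nth 0 xs j *m fK hd) in
  let v j := rndv rd (nth 0 xs j *m fV hd) in
  let w j := rd (expR (rd (\sum_(c < d) q 0 c * k j 0 c))) in
  let num := rndv rd (\sum_(j < i.+1) w j *: v j) in
  let den := rd (\sum_(j < i.+1) w j) in
  rndv rd (den^-1 *: num).

Definition full_layer_apply (rd : R -> R) d H (l : full_layer d H)
    (xs : seq 'rV[R]_d) : seq 'rV[R]_d :=
  [seq rndv rd (fmlp l (nth 0 xs i) (fun h => full_out rd (fheads l h) xs i))
   | i <- iota 0 (size xs)].

Definition full1_solves_Eva (n H d p : nat) : Prop :=
  exists (l : full_layer d H) (emb : nat -> 'I_n -> 'rV[R]_d)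
         (dec : 'rV[R]_d -> 'I_n),
    full_layer_wf (is_fx p) l /\
    forall (f : 'I_n -> 'I_n) (x : 'I_n),
      dec (last 0 (full_layer_apply (fx_rnd p) l
                     (eva_input (fx_rnd p) emb f x))) = f x.

End Transformers.

(* Main.v *)
Require Import Defs.
From HB Require Import structures.
From mathcomp Require Import all_boot all_order all_algebra.
From mathcomp Require Import reals sequences exp.
From Stdlib Require Import FunctionalExtensionality.
From mathcomp Require Import ring lra zify.
Import Order.TTheory GRing.Theory Num.Theory.
Local Open Scope ring_scope.
Set Implicit Arguments.
Unset Strict Implicit.
Unset Printing Implicit Defensive.

Section Recur.
Variables (R : realType) (d H : nat) (rd : R -> R).

Definition st0 : 'I_H -> lin_state R d := fun _ => (0, 0).
Definition upd (l : lin_layer R d H) (st : 'I_H -> lin_state R d) (x : 'rV[R]_d) :=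
  fun h => lin_update rd (lheads l h) (st h) x.
Definition fs l st xs := foldl (upd l) st xs.

Lemma layer_run_cat (l : lin_layer R d H) st xs ys :
  lin_layer_run rd l st (xs ++ ys) =
  lin_layer_run rd l st xs ++ lin_layer_run rd l (fs l st xs) ys.
Proof. by elim: xs st => [|x xs IH] st //=; rewrite IH. Qed.

Lemma size_layer_run (l : lin_layer R d H) st xs : size (lin_layer_run rd l st xs) = size xs.
Proof. by elim: xs st => [|x xs IH] st //=; rewrite IH. Qed.

Fixpoint all_states (ls : seq (lin_layer R d H)) xs :=
  match ls with
  | [::] => [::]
  | l :: ls' => fs l st0 xs :: all_states ls' (lin_layer_apply rd l xs)
  end.

Fixpoint run_from (ls : seq (lin_layer R d H)) sts ys :=
  match ls with
  | [::] => ys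
  | l :: ls' => run_from ls' (behead sts) (lin_layer_run rd l (head st0 sts) ys)
  end.

Lemma lin_run_cat ls xs ys :
  lin_run rd ls (xs ++ ys) = lin_run rd ls xs ++ run_from ls (all_states ls xs) ys.
Proof.
elim: ls xs ys => [|l ls IH] xs ys; first by [].
have E : forall zs, lin_run rd (l :: ls) zs = lin_run rd ls (lin_layer_apply rd l zs) by [].
by rewrite !E /lin_layer_apply layer_run_cat IH.
Qed.

Lemma size_run_from ls sts ys : size (run_from ls sts ys) = size ys.
Proof. by elim: ls sts ys => [|l ls IH] sts ys //=; rewrite IH size_layer_run. Qed.

Lemma size_all_states ls xs : size (all_states ls xs) = size ls.
Proof. by elim: ls xs => [|l ls IH] xs //=; rewrite IH. Qed.

Lemma last_run ls xs y ys :
  last 0 (lin_run rd ls (xs ++ y :: ys)) = last 0 (run_from ls (all_states ls xs) (y :: ys)).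
Proof.
rewrite lin_run_cat last_cat.
case E: (run_from _ _ _) => [|z zs] //=.
by move: (size_run_from ls (all_states ls xs) (y :: ys)); rewrite E.
Qed.

Section Cot.
Variables (ls : seq (lin_layer R d H)) (V : Type) (emb_gen : nat -> V -> 'rV[R]_d)
  (dec : 'rV[R]_d -> V).

Fixpoint cot_from (N : nat) sts (T : nat) (ys : seq 'rV[R]_d) : seq V :=
  match T with
  | 0 => [::]
  | T'.+1 =>
      let v := dec (last 0 (run_from ls sts ys)) in
      v :: cot_from N sts T' (rcons ys (rndv rd (emb_gen (N + size ys) v)))
  end.

Lemma cot_cat T xs y ys :
  cot_generate rd ls emb_gen dec T (xs ++ y :: ys) =
  cot_from (size xs) (all_states ls xs) T (y :: ys).
Proof.
elim: T ys => [|T IH] ys //=.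
rewrite last_run rcons_cat size_cat.
by rewrite (IH (rcons ys _)).
Qed.
End Cot.

Definition valid (P : R -> Prop) (s : 'I_H -> lin_state R d) :=
  forall h, (forall i j, P ((s h).1 i j)) /\ (forall i j, P ((s h).2 i j)).

Lemma valid_upd (P : R -> Prop) : (forall r, P (rd r)) -> forall l st x, valid P (upd l st x).
Proof. by move=> HP l st x h; split=> i j; rewrite /upd /lin_update /= /rndv !mxE. Qed.

Lemma valid_fs (P : R -> Prop) : (forall r, P (rd r)) ->
  forall l xs st, xs != [::] -> valid P (fs l st xs).
Proof.
move=> HP l xs; elim: xs => [|x xs IH] st // _ /=.
case: xs IH => [|y ys] IH /=; first exact: valid_upd.
exact: IH.
Qed.

Lemma valid_all (P : R -> Prop) : (forall r, P (rd r)) ->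
  forall ls xs, xs != [::] -> forall i, (i < size ls)%N -> valid P (nth st0 (all_states ls xs) i).
Proof.
move=> HP; elim=> [|l ls IH] xs Hxs [|i] //= Hi.
  exact: valid_fs.
apply: IH => //.
by rewrite -size_eq0 /lin_layer_apply size_layer_run size_eq0.
Qed.

End Recur.

Section Enc.
Variables (R : realType) (d H p : nat) (P : precision R p) (L : nat).
Local Notation k := (2 ^ p).-1.+1.
Local Notation pv := (pvals P).

Definition encR (r : R) : 'I_k := inord (index r pv).
Definition decR (o : 'I_k) : R := nth 0 pv o.
Lemma encRK r : r \in pv -> decR (encR r) = r.
Proof.
move=> Hr; rewrite /decR /encR inordK ?nth_index //.
rewrite prednK ?expn_gt0 //.
by apply: leq_trans (pvals_size P); rewrite index_mem.
Qed.

Definition CT := {ffun 'I_L -> {ffun 'I_H -> ('M['I_k]_d * 'M['I_k]_(1, d))%type}}.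

Definition enc_st (s : 'I_H -> lin_state R d) : {ffun 'I_H -> ('M['I_k]_d * 'M['I_k]_(1, d))%type} :=
  [ffun h => (map_mx encR (s h).1, map_mx encR (s h).2)].
Definition dec_st (c : {ffun 'I_H -> ('M['I_k]_d * 'M['I_k]_(1, d))%type}) : 'I_H -> lin_state R d :=
  fun h => (map_mx decR (c h).1, map_mx decR (c h).2).

Lemma enc_stK s : valid (fun r => r \in pv) s -> dec_st (enc_st s) = s.
Proof.
move=> Hs; apply: functional_extensionality => h.
rewrite /dec_st ffunE /=; case: (Hs h) => H1 H2.
case E: (s h) => [a b] /=; rewrite E /= in H1 H2.
by congr pair; apply/matrixP => i j; rewrite !mxE encRK.
Qed.

Definition enc_all (sts : seq ('I_H -> lin_state R d)) : CT :=
  [ffun i : 'I_L => enc_st (nth (@st0 R d H) sts i)].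
Definition dec_all (c : CT) := [seq dec_st (c i) | i <- enum 'I_L].

Lemma enc_allK sts : size sts = L ->
  (forall i, (i < L)%N -> valid (fun r => r \in pv) (nth (@st0 R d H) sts i)) ->
  dec_all (enc_all sts) = sts.
Proof.
move=> Hsz Hv; rewrite /dec_all.
transitivity [seq nth (@st0 R d H) sts (val i) | i <- enum 'I_L].
  by apply: eq_map => i; rewrite ffunE enc_stK //; apply: Hv.
by rewrite (map_comp (nth _ sts) val) val_enum_ord -Hsz -/(mkseq _ _) mkseq_nth.
Qed.

Lemma card_CT : #|{: CT}| = (2 ^ (L * H * d * (d + 1) * p))%N.
Proof.
rewrite card_ffun card_ffun card_prod !card_mx card_ord prednK ?expn_gt0 //.
rewrite card_ord -!expnM -expnD !card_ord.
rewrite -expnM; congr expn; rewrite !mul1n mulnDr muln1; ring.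
Qed.
End Enc.

Lemma count_lemma n (C : finType) (code : {ffun 'I_n -> 'I_n} -> C) (G : C -> 'I_n -> 'I_n) :
  (forall F x, G (code F) x = F x) -> (n ^ n <= #|C|)%N.
Proof.
move=> HG.
have inj : injective code.
  by move=> F1 F2 E; apply/ffunP => x; rewrite -HG E HG.
by move: (leq_card _ inj); rewrite card_ffun !card_ord.
Qed.

Lemma real_contra (R : realType) n N : (n ^ n <= 2 ^ N)%N ->
  ~ ((N%:R : R) < n%:R * (ln (n%:R : R) / ln 2)).
Proof.
move=> Hle Hlt.
case: n Hle Hlt => [|n] Hle Hlt.
  by move: Hlt; rewrite mul0r ltNge ler0n.
have ln2 : (0 : R) < ln 2 by apply: ln_gt0; rewrite ltr1n.
have Hn : (0 : R) < n.+1%:R by rewrite ltr0n.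
have H2 : ln ((n.+1 ^ n.+1)%:R : R) <= ln ((2 ^ N)%:R).
  rewrite ler_ln. by rewrite ler_nat.
  by rewrite posrE ltr0n expn_gt0.
  by rewrite posrE ltr0n expn_gt0.
rewrite natrX (natrX _ 2 N) in H2. 
have two : (0 : R) < 2 by rewrite ltr0n.
rewrite (lnXn _ Hn) (lnXn _ two) in H2. 
rewrite -[_ *+ n.+1]mulr_natr -[_ *+ N]mulr_natr in H2.
move: Hlt; rewrite mulrA ltr_pdivlMr // => H3.
rewrite mulrC [X in _ < X]mulrC in H3.
by have := lt_le_trans H3 H2; rewrite ltxx.
Qed.

Lemma part1 (R : realType) (n L H d p : nat) :
  ((L * H * d * (d + 1) * p)%N%:R : R) < n%:R * (ln (n%:R : R) / ln 2) ->
  forall P : precision R p, ~ lin_solves_Eva P n L H d.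
Proof.
move=> Hlt P [ls [emb [dec [Hsz [_ Hsol]]]]].
apply: (real_contra _ Hlt).
case: n emb dec Hsol {Hlt} => [|n] emb dec Hsol; first by rewrite expn0 expn_gt0.
set rd := rnd P.
pose pre (F : {ffun 'I_n.+1 -> 'I_n.+1}) :=
  [seq rndv rd (emb (val i) (F i)) | i <- enum 'I_n.+1].
pose code F := enc_all P L (all_states rd ls (pre F)).
pose G (c : CT d H p L) (x : 'I_n.+1) :=
  dec (last 0 (run_from rd ls (dec_all P c) [:: rndv rd (emb n.+1 x)])).
rewrite -(card_CT d H p L).
apply: (count_lemma (code := code) (G := G)) => F x.
rewrite /G /code enc_allK.
- rewrite -last_run; exact: Hsol.
- by rewrite size_all_states.
- move=> i Hi; apply: valid_all => //.
  + by move=> r; apply: rnd_in.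
  + by rewrite -size_eq0 /pre size_map size_enum_ord.
  + by rewrite Hsz.
Qed.

Lemma part3 (R : realType) (n L H d p : nat) :
  ((L * H * d * (d + 1) * p)%N%:R : R) < n%:R * (ln (n%:R : R) / ln 2) ->
  forall P : precision R p, ~ lin_cot_solves_Eva P n L H d.
Proof.
move=> Hlt P [V [T [ls [emb [emb_gen [dec [ans [Hsz [_ Hsol]]]]]]]]].
apply: (real_contra _ Hlt).
case: n emb ans Hsol {Hlt} => [|n] emb ans Hsol; first by rewrite expn0 expn_gt0.
set rd := rnd P.
pose pre (F : {ffun 'I_n.+1 -> 'I_n.+1}) :=
  [seq rndv rd (emb (val i) (F i)) | i <- enum 'I_n.+1].
pose code F := enc_all P L (all_states rd ls (pre F)).
pose G (c : CT d H p L) (x : 'I_n.+1) :=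
  ans (cot_from rd ls emb_gen dec n.+1 (dec_all P c) T [:: rndv rd (emb n.+1 x)]).
rewrite -(card_CT d H p L).
apply: (count_lemma (code := code) (G := G)) => F x.
rewrite /G /code enc_allK.
- have := Hsol F x; rewrite /eva_input -/(pre F) cot_cat.
  by rewrite /pre size_map size_enum_ord.
- by rewrite size_all_states.
- move=> i Hi; apply: valid_all => //.
  + by move=> r; apply: rnd_in.
  + by rewrite -size_eq0 /pre size_map size_enum_ord.
  + by rewrite Hsz.
Qed.

Section Fx.
Variables (R : realType) (m : nat).
Hypothesis m_gt0 : (0 < m)%N.
Local Notation p := (2 * m)%N.
Local Notation s := (fx_scale R p).

Lemma half_p : p./2 = m.
Proof. by rewrite mul2n doubleK. Qed.

Lemma scaleE : s = (2 ^ m)%:R.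
Proof. by rewrite /fx_scale half_p natrX. Qed.

Lemma s_gt0 : (0 : R) < s.
Proof. by rewrite scaleE ltr0n expn_gt0. Qed.

Lemma lo_hi_E : fx_lo p = - (2 * 2 ^ (m - 1) * 2 ^ (m - 1))%N%:Z /\
  fx_hi p = (2 * 2 ^ (m - 1) * 2 ^ (m - 1))%N%:Z - 1.
Proof.
have Ea : (2 ^ p = 2 * (2 * 2 ^ (m - 1) * 2 ^ (m - 1)))%N.
  rewrite -expnS -expnD -expnS; congr expn; lia.
rewrite /fx_lo /fx_hi Ea mulKn //; split => //.
congr (_ - _); congr Posz; lia.
Qed.

Lemma rep_int (z : int) : (`|z| < 2 ^ (m - 1))%N ->
  fx_lo p <= z * (2 ^ m)%N%:Z <= fx_hi p.
Proof.
case: lo_hi_E => -> ->.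
have -> : (2 ^ m = 2 * 2 ^ (m - 1))%N by rewrite -expnS; congr expn; lia.
move: (2 ^ (m - 1))%N => a Hz.
apply/andP; split; nia.
Qed.

Lemma rd_clamp (Z : int) : fx_lo p <= Z <= fx_hi p ->
  Num.max (fx_lo p) (Num.min (fx_hi p) Z) = Z.
Proof. by case/andP => H1 H2; rewrite min_r // max_r. Qed.

Lemma rd_int (z : int) : (`|z| < 2 ^ (m - 1))%N -> fx_rnd p (z%:~R : R) = z%:~R.
Proof.
move=> Hz; rewrite /fx_rnd.
have E : (z%:~R : R) * s = (z * (2 ^ m)%N%:Z)%:~R by rewrite scaleE intrM.
rewrite E.
have -> : Num.floor ((z * (2 ^ m)%N%:Z)%:~R + (2%:R : R)^-1) = z * (2 ^ m)%N%:Z.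
  apply: floor_def; rewrite lerDl invr_ge0 ler0n /= intrD ltrD2l.
  by rewrite invf_lt1 ?ltr1n ?ltr0n.
rewrite rd_clamp ?rep_int // -E mulfK //; exact: lt0r_neq0 s_gt0.
Qed.

Lemma is_fx_int (z : int) : (`|z| < 2 ^ (m - 1))%N -> is_fx p (z%:~R : R).
Proof.
move=> Hz; exists (z * (2 ^ m)%N%:Z); split; first exact: rep_int.
rewrite intrM; have -> : ((2 ^ m)%N%:Z%:~R : R) = s by rewrite scaleE.
by rewrite mulfK //; exact: lt0r_neq0 s_gt0.
Qed.

Lemma rd_small (r : R) : 0 <= r -> r * s < 2%:R^-1 -> fx_rnd p r = 0.
Proof.
move=> H0 H1; rewrite /fx_rnd.
have -> : Num.floor (r * s + (2%:R : R)^-1) = 0.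
  apply: floor_def; rewrite /= add0r; apply/andP; split.
    by apply: addr_ge0; [apply: mulr_ge0 => //; apply: ltW; exact: s_gt0 | rewrite invr_ge0 ler0n].
  rewrite /=; move: H1; rewrite -/(_ %:~R) /=. lra.
rewrite rd_clamp ?mul0r //.
have := rep_int (z := 0) (expn_gt0 _ _); rewrite mul0r; apply.
Qed.

Lemma two_pow_le_exp (C : nat) : (2 ^ C)%:R <= expR (C%:R : R).
Proof.
rewrite -[C%:R]mulr1 expRM_natl natrX.
apply: lerXn2r; rewrite ?nnegrE ?ler0n ?expR_ge0 //.
by have := expR_ge1Dx (1 : R).
Qed.

Lemma exp_small (t : R) : t <= - ((m + 2)%N%:R) -> expR t * s < 2%:R^-1.
Proof.
move=> Ht.
have H1 : expR t <= ((2 ^ (m + 2))%:R)^-1.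
  apply: (le_trans (y := expR (- ((m + 2)%N%:R)))); first by rewrite ler_expR.
  rewrite expRN lef_pV2 ?posrE ?expR_gt0 ?ltr0n ?expn_gt0 //.
  exact: two_pow_le_exp.
have H2 : expR t * s <= ((2 ^ (m + 2))%:R)^-1 * s.
  by rewrite ler_pM2r //; exact: s_gt0.
apply: le_lt_trans H2 _.
rewrite scaleE expnD natrM invfM mulrAC mulVf ?pnatr_eq0 ?expn_eq0 // mul1r.
rewrite ltf_pV2 ?posrE ?ltr0n //. by rewrite ltr_nat.
Qed.
End Fx.

Section Sel.
Variable R : realType.

Definition rowz (z : nat -> int) : 'rV[R]_7 := \row_(c < 7) (z c)%:~R.
Definition sel (g : nat -> nat) (P : nat -> bool) : 'M[R]_7 :=
  \matrix_(r < 7, c < 7) (((val r == g c) && P c)%:R).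

Lemma rowz_sel z g P :
  rowz z *m sel g P = rowz (fun c => if P c && (g c < 7)%N then z (g c) else 0).
Proof.
apply/matrixP => i c; rewrite !mxE.
case Pc: (P c) => /=; last first.
  by rewrite big1 // => r _; rewrite !mxE Pc andbF mulr0.
case: (ltnP (g c) 7) => Hg.
  rewrite (bigD1 (Ordinal Hg)) //= !mxE eqxx Pc mulr1 big1 ?addr0 // => r Hr.
  rewrite !mxE Pc andbT.
  case: eqP => E; last by rewrite mulr0.
  by case/eqP: Hr; apply: val_inj.
rewrite big1 // => r _; rewrite !mxE Pc andbT.
have : (val r != g c) by rewrite neq_ltn (leq_trans (ltn_ord r) Hg).
by move/negbTE => ->; rewrite mulr0.
Qed.
End Sel.

Section Construct.
Variables (R : realType) (n m : nat).
Hypotheses (n_gt0 : (0 < n)%N) (m_gt0 : (0 < m)%N)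
  (Hbig : (2 * (m + 2) * n * n < 2 ^ (m - 1))%N).
Local Notation p := (2 * m)%N.
Local Notation rd := (@fx_rnd R p).
Local Notation C := (m + 2)%N.

Definition Ez (pos tok c : nat) : int :=
  if (pos < n)%N then nth 0 [:: 1; pos%:Z; (pos * pos)%:Z; 0; 0; 0; tok%:Z] c
  else nth 0 [:: 1; 0; 1; - (C * tok * tok)%:Z; (2 * C * tok)%:Z; - C%:Z; 0] c.

Lemma Ez_bound pos tok c : (tok < n)%N -> (`|Ez pos tok c| < 2 ^ (m - 1))%N.
Proof.
move=> Ht; apply: leq_ltn_trans Hbig.
rewrite /Ez; case: ifP => Hp.
  do 7?[case: c => [|c]] => /=; rewrite ?nth_nil /=; nia.
have h1 : (tok <= n * n)%N by nia.
have h2 : (C * (n * n) <= 2 * C * n * n)%N by rewrite -!mulnA leq_pmull.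
do 7?[case: c => [|c]] => /=; rewrite ?nth_nil ?abszN /=; try nia.
apply: leq_trans h2; rewrite -mulnA leq_mul2l; apply/orP; right.
by apply: leq_mul; apply: ltnW.
Qed.

Lemma rowz_exact z : (forall c, (c < 7)%N -> (`|z c| < 2 ^ (m - 1))%N) ->
  rndv rd (rowz R z) = rowz R z.
Proof. by move=> Hz; apply/matrixP => i c; rewrite !mxE rd_int ?Hz. Qed.


Definition embz (pos : nat) (tok : 'I_n) : 'rV[R]_7 := rowz R (Ez pos tok).
Definition Qm : 'M[R]_7 := sel R (addn^~ 3) (fun c => (c < 3)%N).
Definition Km : 'M[R]_7 := sel R id (fun c => (c < 3)%N).
Definition Vm : 'M[R]_7 := sel R (fun _ => 6%N) (fun c => c == 0%N).
Definition hd0 : full_head R 7 := FullHead Qm Km Vm.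
Definition lay : full_layer R 7 1 := FullLayer (fun _ => hd0) (fun _ hs => hs ord0).
Definition x0 : 'I_n := Ordinal n_gt0.
Definition decz (y : 'rV[R]_7) : 'I_n := insubd x0 `|Num.floor (y ord0 ord0)|%N.

Lemma last_map_iota (F : nat -> 'rV[R]_7) N : last 0 [seq F i | i <- iota 0 N.+1] = F N.
Proof. by rewrite -[N.+1]addn1 iotaD map_cat last_cat /=. Qed.

Section FX.
Variables (f : 'I_n -> 'I_n) (x : 'I_n).
Local Notation xs := (eva_input rd embz f x).
Definition tokf (j : nat) : 'I_n := if (j < n)%N then f (nth x0 (enum 'I_n) j) else x.

Lemma size_xs : size xs = n.+1.
Proof. by rewrite /eva_input size_cat size_map size_enum_ord addn1. Qed.

Lemma nth_xs j : (j <= n)%N -> nth 0 xs j = embz j (tokf j).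
Proof.
move=> Hj; rewrite /eva_input nth_cat size_map size_enum_ord /tokf.
case: ltnP => Hjn.
  rewrite (nth_map x0) ?size_enum_ord //.
  have E : val (nth x0 (enum (ordinal n)) j) = j := nth_enum_ord x0 Hjn.
  rewrite E /embz rowz_exact //.
  by move=> c _; apply: Ez_bound.
have -> : j = n by apply/eqP; rewrite eqn_leq Hj Hjn.
by rewrite subnn /= /embz rowz_exact // => c _; apply: Ez_bound.
Qed.


Lemma rowz_sel_exact pos (tok : 'I_n) g P :
  rndv rd (embz pos tok *m sel R g P) =
  rowz R (fun c => if P c && (g c < 7)%N then Ez pos tok (g c) else 0).
Proof.
rewrite /embz rowz_sel rowz_exact // => c _.
case: ifP => _; first exact: Ez_bound.
by rewrite expn_gt0.
Qed.

Definition scz (j : nat) : int :=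
  if (j < n)%N then - (C%:Z * ((x%:Z - j%:Z) ^+ 2)) else - (C%:Z * (x%:Z * x%:Z + 1)).

Lemma score_eq (j : nat) (tok : 'I_n) :
  \sum_(c < 7) (rowz R (fun c => if (c < 3)%N && (c + 3 < 7)%N then Ez n x (c + 3) else 0)) 0 c *
     (rowz R (fun c => if (c < 3)%N && (c < 7)%N then Ez j tok c else 0)) 0 c = (scz j)%:~R.
Proof.
rewrite !big_ord_recr big_ord0 /= !mxE /=.
rewrite !mul0r !addr0 add0r -!intrM -!intrD; congr (_%:~R).
rewrite /Ez /scz ltnn /=; case: ifP => _ /=.
  rewrite !PoszM. ring.
rewrite !PoszM. ring.
Qed.

Lemma scz_bound j : (j <= n)%N -> (`|scz j| < 2 ^ (m - 1))%N.
Proof.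
move=> Hj; apply: leq_ltn_trans Hbig.
have hx := ltn_ord x.
have h2 : (C * (n * n) <= 2 * C * n * n)%N by rewrite -!mulnA leq_pmull.
apply: leq_trans h2.
rewrite /scz; case: ifP => Hjn; rewrite abszN abszM /=.
  rewrite leq_mul2l; apply/orP; right.
  have hd : (`|x%:Z - j%:Z| <= n)%N by lia.
  by rewrite abszX expnS expn1 leq_mul.
rewrite leq_mul2l; apply/orP; right.
have : (x.+1 <= n)%N := hx.
nia.
Qed.

Lemma weight_eq j : (j <= n)%N ->
  rd (expR (rd ((scz j)%:~R))) = ((j == x) : nat)%:R.
Proof.
move=> Hj; rewrite rd_int //; last exact: scz_bound.
case: eqP => Ejx.
  have -> : scz j = 0 by rewrite /scz Ejx ltn_ord subrr expr0n /= mulr0 oppr0.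
  rewrite expR0 /=.
  have h1 : (1 < 2 ^ (m - 1))%N by apply: leq_ltn_trans Hbig; nia.
  have := @rd_int R m m_gt0 1 h1; rewrite /= => ->.
  by [].
rewrite /= rd_small //; first exact: expR_ge0.
apply: exp_small => //.
have : scz j <= - (C%:Z).
  rewrite /scz; case: ifP => Hjn.
    rewrite lerN2 -[X in X <= _]mulr1 ler_wpM2l //.
    have : x%:Z != j%:Z by apply/eqP => [[]] /esym.
    move: (x%:Z - j%:Z) (subr_eq0 (x%:Z) (j%:Z)) => t Et; rewrite -Et => Ht.
    rewrite expr2; nia.
  rewrite lerN2 -[X in X <= _]mulr1 ler_wpM2l //; lia.
rewrite -(ler_int R) => H; apply: le_trans H _.
by rewrite intrN.
Qed.

Lemma tokf_n : tokf n = x.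
Proof. by rewrite /tokf ltnn. Qed.

Lemma tokf_x : tokf x = f x.
Proof. by rewrite /tokf ltn_ord nth_ord_enum. Qed.

Lemma full_out_eq :
  full_out rd hd0 xs n = rowz R (fun c => if c == 0%N then (f x)%:Z else 0).
Proof.
have Hw : forall j : 'I_n.+1,
  rd (expR (rd (\sum_(c < 7) (rndv rd (nth 0 xs n *m Qm)) 0 c *
                      (rndv rd (nth 0 xs j *m Km)) 0 c))) = ((val j == val x) : nat)%:R.
  move=> j; have Hj : (j <= n)%N by rewrite -ltnS.
  rewrite !nth_xs // /Qm /Km !rowz_sel_exact tokf_n.
  rewrite (score_eq j (tokf j)); exact: weight_eq.
rewrite /full_out /=.
under eq_bigr => j _ do rewrite Hw.
rewrite (eq_bigr (fun j : 'I_n.+1 => ((val j == val x) : nat)%:R *: rndv rd (nth 0 xs j *m Vm))); last by move=> j _; rewrite Hw.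
set x' := widen_ord (leqnSn n) x.
have Ex : (val x' == val x) = true by rewrite eqxx.
have Hne : forall j : 'I_n.+1, j != x' -> (val j == val x) = false.
  move=> j Hj; apply/negbTE; apply: contra Hj => /eqP E; apply/eqP/val_inj.
  by rewrite /= E.
rewrite (bigD1 x') // Ex big1 ?addr0; last first.
  by move=> j Hj; rewrite Hne.
rewrite (bigD1 x') // Ex big1 ?addr0; last first.
  by move=> j Hj; rewrite Hne // scale0r.
have h1 : (1 < 2 ^ (m - 1))%N by apply: leq_ltn_trans Hbig; nia.
rewrite /= !addr0.
have -> : rd 1 = 1 by have := @rd_int R m m_gt0 1 h1.
rewrite invr1 !scale1r.
have Hx : (x <= n)%N by apply: ltnW.
rewrite nth_xs // /Vm rowz_sel_exact tokf_x rowz_exact; last first.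
  move=> c _; case: ifP => _; first exact: Ez_bound.
  by rewrite expn_gt0.
apply/matrixP => i c; rewrite !mxE /=.
case: (nat_of_ord c == 0%N) => /=.
  by rewrite rd_int //; [rewrite /Ez ltn_ord | exact: Ez_bound].
by rewrite rd_int // expn_gt0.
Qed.
End FX.

Lemma lay_wf : full_layer_wf (is_fx p) lay.
Proof.
have h1 : (1 < 2 ^ (m - 1))%N by apply: leq_ltn_trans Hbig; nia.
have Hb : forall b : bool, is_fx p ((b : nat)%:R : R).
  move=> b; have := @is_fx_int R m m_gt0 (b : nat)%:Z; apply.
  by case: b => //=; rewrite expn_gt0.
by move=> h i j; rewrite /= /Qm /Km /Vm /sel !mxE; split; [|split]; apply: Hb.
Qed.

Lemma lay_solves f x :
  decz (last 0 (full_layer_apply rd lay (eva_input rd embz f x))) = f x.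
Proof.
rewrite /full_layer_apply size_xs last_map_iota /= full_out_eq rowz_exact; last first.
  move=> c _; case: ifP => _ /=; last by rewrite expn_gt0.
  apply: leq_ltn_trans Hbig; have := ltn_ord (f x); nia.
rewrite /decz mxE /= intrKfloor /=.
by rewrite valKd.
Qed.
End Construct.



Lemma part2 : exists c k : nat, forall (R : realType) (n : nat), (0 < n)%N ->
     exists H d p : nat,
       (H * d * p <= c * (trunc_log 2 n).+1 ^ k)%N /\
       full1_solves_Eva R n H d p.
Proof.
exists 168%N, 1%N => R n Hn.
set B := (trunc_log 2 n).+1.
have hn : (n < 2 ^ B)%N by apply: trunc_log_ltn.
have hB : (B < 2 ^ B)%N by apply: ltn_expl.
set m := (4 * B + 8)%N.
have m_gt0 : (0 < m)%N by rewrite /m addnS.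
have Hbig : (2 * (m + 2) * n * n < 2 ^ (m - 1))%N.
  have -> : (2 ^ (m - 1) = 128 * (2 ^ B * 2 ^ B * 2 ^ B * 2 ^ B))%N.
    rewrite -!expnD -(expnD 2 7); congr expn; rewrite /m; lia.
  move: (2 ^ B)%N hn hB => a hn hB.
  have h2 : (2 * (m + 2) <= 28 * a)%N by rewrite /m; lia.
  have h3 : (n * n < a * a)%N by apply: ltn_mul.
  apply: (leq_ltn_trans (n := 28 * a * (n * n))).
    by rewrite -mulnA leq_mul.
  apply: (leq_trans (n := 28 * a * (a * a))).
    by rewrite ltn_pmul2l //; lia.
  nia.
exists 1%N, 7%N, (2 * m)%N; split.
  rewrite expn1 /m; lia.
exists (lay R), (embz R m), (decz Hn); split.
  exact: (lay_wf R Hn m_gt0 Hbig).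
exact: (lay_solves R Hn m_gt0 Hbig).
Qed.

Unset Implicit Arguments.

Theorem theoremA3 :
  (* lower bound for linear attention *)
  (forall (R : realType) (n L H d p : nat),
     ((L * H * d * (d + 1) * p)%N%:R : R) < n%:R * (ln (n%:R : R) / ln 2) ->
     forall P : precision R p, ~ lin_solves_Eva P n L H d)
  /\
  (* upper bound: one layer of full attention with H*d*p = O(polylog n) *)
  (exists c k : nat, forall (R : realType) (n : nat), (0 < n)%N ->
     exists H d p : nat,
       (H * d * p <= c * (trunc_log 2 n).+1 ^ k)%N /\
       full1_solves_Eva R n H d p)
  /\
  (* lower bound for linear attention with chain of thought *)
  (forall (R : realType) (n L H d p : nat),
     ((L * H * d * (d + 1) * p)%N%:R : R) < n%:R * (ln (n%:R : R) / ln 2) ->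
     forall P : precision R p, ~ lin_cot_solves_Eva P n L H d).
Proof.
split; first exact: part1.
split; first exact: part2.
exact: part3.
Qed.
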